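(* For all $k>0$, all powers of $x$ that appear in $T_2,T_3,\dots,T_{k+1}$ (written as polynomials in $x$ and $y$ with coefficients in $k$ via the recursive construction) are multiples of $d_k=\gcd(p_1,\dots,p_k)$.
   Context: Setting: $k$ (the base field) is algebraically closed of characteristic $0$; $\nu^*$ is a $k$-valuation of a function field $K^*$ of transcendence degree $2$ with valuation ring $V^*$, value group a subgroup of $\mathbb{Q}$ and residue field $k$; $S$ is an algebraic two-dimensional regular local ring with quotient field $K^*$ dominated by $V^*$, with regular parameters $(x,y)$, and $\nu^*(x)=1$. Jumping polynomials: $T_0=x$, $T_1=y$, $q_0=\infty$, $p_1,q_1$ coprime positive integers with $\nu^*(y)=p_1/q_1$; for $i\ge1$, $n_{i,j}$ ($0\le j<i$) are nonnegative integers with $n_{i,j}<q_j$ and $q_i\nu^*(T_i)=\sum_{j<i}n_{i,j}\nu^*(T_j)$, $\lambda_i\in k$ is the residue of $T_i^{q_i}/\prod_{j<i}T_j^{n_{i,j}}$, $T_{i+1}=T_i^{q_i}-\lambda_i\prod_{j<i}T_j^{n_{i,j}}$, and $p_{i+1},q_{i+1}$ are coprime positive integers with $\nu^*(T_{i+1})=q_i\nu^*(T_i)+\frac{1}{q_1\cdots q_i}\frac{p_{i+1}}{q_{i+1}}$. *)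

(* Defs.v *)
From HB Require Import structures.
From mathcomp Require Import all_boot all_order all_algebra.
Set Implicit Arguments. Unset Strict Implicit. Unset Printing Implicit Defensive.
Import Order.TTheory GRing.Theory Num.Theory.
Local Open Scope ring_scope.

(* Bivariate polynomials over K: an element of {poly {poly K}} is
   sum_b c_b(x) y^b; the outer variable is y, the inner one is x. *)
Section Jumping.
Variable K : fieldType.

Definition varx : {poly {poly K}} := ('X)%:P.
Definition vary : {poly {poly K}} := 'X.

Fixpoint jseq (q : nat -> nat) (n : nat -> nat -> nat) (lam : nat -> K)
    (m : nat) : seq {poly {poly K}} :=
  match m with
  | 0 => [:: varx]
  | S m' =>
      let s := jseq q n lam m' in
      rcons s (if m' is 0 then vary
               else nth 0 s m' ^+ q m'
                    - (lam m')%:P%:P * \prod_(j < m') nth 0 s j ^+ n m' j)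
  end.

Definition jpoly q n lam (i : nat) : {poly {poly K}} := nth 0 (jseq q n lam i) i.
End Jumping.

(* beta i = nu^*(T_i), as forced by the data: beta 0 = nu(x) = 1,
   beta 1 = p_1/q_1, beta (i+1) = q_i beta_i + (1/(q_1...q_i)) (p_{i+1}/q_{i+1}). *)
Fixpoint jbeta (p q : nat -> nat) (i : nat) : rat :=
  match i with
  | 0 => 1
  | S i' =>
      if i' is 0 then (p 1)%:R / (q 1)%:R
      else (q i')%:R * jbeta p q i'
           + (p i)%:R / ((q i)%:R * (\prod_(1 <= j < i) q j)%N%:R)
  end.

Definition occurs_x_pow (K : fieldType) (T : {poly {poly K}}) (a : nat) :=
  exists b, (T`_b)`_a != 0.

(* Main.v *)
Require Import Defs.
From HB Require Import structures.
From mathcomp Require Import all_boot all_order all_algebra.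
From mathcomp Require Import ring.
Import Order.TTheory GRing.Theory Num.Theory.
Local Open Scope ring_scope.

Section Good.
Variable K : fieldType.
Variable d : nat.

Definition goodp (p : {poly K}) := forall a, ~~ (d %| a)%N -> p`_a = 0.
Definition good (T : {poly {poly K}}) := forall b, goodp (T`_b).

Lemma goodp_mul p r : goodp p -> goodp r -> goodp (p * r).
Proof.
move=> Hp Hr a nd; rewrite coefM big1 // => [[i /=]]; rewrite ltnS => lei _.
case: (boolP (d %| i)%N) => di; last by rewrite Hp ?mul0r.
rewrite (Hr (a - i)%N) ?mulr0 //; apply: contra nd => h.
by rewrite -(subnKC lei) dvdn_add.
Qed.

Lemma good_mul T S : good T -> good S -> good (T * S).
Proof.
move=> HT HS b a nd; rewrite coefM coef_sum big1 // => i _.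
by apply: goodp_mul.
Qed.

Lemma good_add T S : good T -> good S -> good (T + S).
Proof. by move=> HT HS b a nd; rewrite !coefD HT ?HS ?addr0. Qed.

Lemma good_opp T : good T -> good (- T).
Proof. by move=> HT b a nd; rewrite !coefN HT ?oppr0. Qed.

Lemma goodC (c : K) : good c%:P%:P.
Proof.
move=> b a nd; rewrite coefC; case: (b == 0%N); last by rewrite coef0.
by rewrite coefC; case: eqP nd => // ->; rewrite dvdn0.
Qed.

Lemma good1 : good 1.
Proof. by have := goodC 1; rewrite !polyC1. Qed.

Lemma good_exp T m : good T -> good (T ^+ m).
Proof.
move=> HT; elim: m => [|m IH]; first by rewrite expr0; apply: good1.
by rewrite exprS; apply: good_mul.
Qed.

Lemma good_vary : good (vary K).
Proof.
move=> b a nd; rewrite /vary coefX; case: (b == 1%N); last by rewrite coef0.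
by rewrite coefC; case: eqP nd => // ->; rewrite dvdn0.
Qed.

Lemma good_xpow m : (d %| m)%N -> good (varx K ^+ m).
Proof.
move=> dm b a nd; rewrite /varx -rmorphXn coefC; case: (b == 0%N); last by rewrite coef0.
by rewrite coefXn; case: eqP nd => // ->; rewrite dm.
Qed.

End Good.

Section Jseq.
Variable K : fieldType.
Variables (q : nat -> nat) (n : nat -> nat -> nat) (lam : nat -> K).

Lemma size_jseq m : size (jseq q n lam m) = m.+1.
Proof. by elim: m => //= m IH; rewrite size_rcons IH. Qed.

Lemma nth_jseq m i : (i <= m)%N -> nth 0 (jseq q n lam m) i = jpoly q n lam i.
Proof.
elim: m => [|m IH]; first by rewrite leqn0 => /eqP ->.
rewrite leq_eqVlt => /orP [/eqP -> //|]; rewrite ltnS => lei.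
by rewrite /= nth_rcons size_jseq ltnS lei IH.
Qed.

Lemma jpolyS m : jpoly q n lam m.+1 =
  if m is 0 then vary K
  else jpoly q n lam m ^+ q m
       - (lam m)%:P%:P * \prod_(j < m) jpoly q n lam j ^+ n m j.
Proof.
rewrite /jpoly /= nth_rcons size_jseq ltnn eqxx.
case: m => // m; rewrite nth_jseq //; congr (_ - _ * _).
by apply: eq_bigr => j _; rewrite nth_jseq // ltnW.
Qed.

End Jseq.

Section Arith.
Variables (p q : nat -> nat).

Fixpoint NN (j : nat) : nat :=
  match j with
  | 0 => 1%N
  | S j' => if j' is 0 then p 1 else (q j' * NN j' * q j + p j)%N
  end.

Definition QQ t := (\prod_(1 <= l < t.+1) q l)%N.

Lemma QQS t : (1 <= t)%N -> QQ t = (QQ t.-1 * q t)%N.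
Proof. by move=> ht; rewrite /QQ big_nat_recr //= prednK. Qed.

Lemma QQ_gt0 t : (forall l, (1 <= l <= t)%N -> 0 < q l)%N -> (0 < QQ t)%N.
Proof.
move=> H; rewrite /QQ big_nat_cond; elim/big_ind: _ => //; first by move=> x y; rewrite muln_gt0 => -> ->.
by move=> l; rewrite andbT => /andP [h1 h2]; apply: H; rewrite h1 -ltnS h2.
Qed.

Lemma jbetaSS j : jbeta p q j.+2 = (q j.+1)%:R * jbeta p q j.+1
   + (p j.+2)%:R / ((q j.+2)%:R * (QQ j.+1)%:R).
Proof. by []. Qed.

Lemma NNSS j : NN j.+2 = (q j.+1 * NN j.+1 * q j.+2 + p j.+2)%N.
Proof. by []. Qed.

Lemma betaN j : (1 <= j)%N -> (forall l, (1 <= l <= j)%N -> 0 < q l)%N ->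
  jbeta p q j * (QQ j)%:R = (NN j)%:R.
Proof.
elim: j => // j IH _ Hq.
case: j IH Hq => [|j] IH Hq.
  rewrite /= /QQ big_nat1; have := Hq 1%N (leqnn 2); rewrite lt0n => q1.
  by rewrite mulfVK // pnatr_eq0.
rewrite (@QQS j.+2 isT) jbetaSS NNSS.
have Hq' : forall l, (1 <= l <= j.+1)%N -> (0 < q l)%N.
  by move=> l /andP [h1 h2]; apply: Hq; rewrite h1 ltnW.
have IH' := IH isT Hq'.
have h0 : (QQ j.+1)%:R != 0 :> rat by rewrite pnatr_eq0 -lt0n (@QQ_gt0 _ Hq').
have h1 : (q j.+2)%:R != 0 :> rat by rewrite pnatr_eq0 -lt0n; apply: Hq; rewrite leqnn.
rewrite !natrD !natrM -IH'.
by field; rewrite h0 h1.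
Qed.

End Arith.

Lemma biggcd_dvd (F : nat -> nat) m k l : (m <= l < k)%N ->
  (\big[gcdn/0%N]_(m <= i < k) F i %| F l)%N.
Proof.
move=> /andP [h1 h2]; rewrite (big_cat_nat h1 (ltnW h2)) /= [X in gcdn _ X]big_ltn //.
exact: dvdn_trans (dvdn_gcdr _ _) (dvdn_gcdl _ _).
Qed.

Theorem corollary7p2 (K : closedFieldType) (HK : [pchar K] =i pred0)
    (p q : nat -> nat) (n : nat -> nat -> nat) (lam : nat -> K) (k : nat) :
  (0 < k)%N ->
  (forall i, (1 <= i <= k)%N -> [/\ (0 < p i)%N, (0 < q i)%N & coprime (p i) (q i)]) ->
  (forall i j, (1 <= j)%N -> (j < i)%N -> (i <= k)%N -> (n i j < q j)%N) ->
  (forall i, (1 <= i <= k)%N ->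
     (q i)%:R * jbeta p q i = \sum_(j < i) (n i j)%:R * jbeta p q j) ->
  forall i a, (2 <= i <= k.+1)%N -> occurs_x_pow (jpoly q n lam i) a ->
  (\big[gcdn/0%N]_(1 <= l < k.+1) p l %| a)%N.
Proof.
move=> k0 Hpq _ Hbeta i a hi [b hb].
set d := \big[gcdn/0%N]_(1 <= l < k.+1) p l.
have dp : forall l, (1 <= l <= k)%N -> (d %| p l)%N.
  by move=> l /andP [h1 h2]; apply: biggcd_dvd; rewrite h1 ltnS.
have qpos : forall l, (1 <= l <= k)%N -> (0 < q l)%N by move=> l /Hpq [].
have dq : forall l, (1 <= l <= k)%N -> coprime d (q l).
  by move=> l hl; have [_ _ c] := Hpq l hl; apply: coprime_dvdl (dp l hl) c.
have dN : forall j, (1 <= j <= k)%N -> (d %| NN p q j)%N.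
  elim=> // j IH /andP [_ hj]; case: j IH hj => [|j] IH hj /=; first by apply: dp.
  rewrite dvdn_add //; last by apply: dp; rewrite hj.
  by apply: dvdn_mulr; apply: dvdn_mull; apply: IH; rewrite /= ltnW.
have dQ : forall t, (t <= k)%N -> coprime d (QQ q t).
  move=> t ht; rewrite /QQ big_nat_cond; elim/big_ind: _ => //; first by rewrite coprimen1.
    by move=> x y cx cy; rewrite coprimeMr cx cy.
  by move=> l; rewrite andbT => /andP [h1 h2]; apply: dq; rewrite h1 (leq_trans _ ht) // -ltnS.
have betaT : forall j t, (1 <= j)%N -> (j <= t)%N -> (t <= k)%N ->
    jbeta p q j * (QQ q t)%:R = (NN p q j * \prod_(j.+1 <= l < t.+1) q l)%N%:R.
  move=> j t hj hjt htk; rewrite /QQ (big_cat_nat (isT : (1 <= j.+1)%N) (hjt : (j.+1 <= t.+1)%N)) /=.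
  rewrite natrM mulrA -/(QQ q j) betaN ?natrM //.
  by move=> l /andP [h1 h2]; apply: qpos; rewrite h1 (leq_trans h2 (leq_trans hjt htk)).
have dn0 : forall m, (1 <= m <= k)%N -> (d %| n m 0%N)%N.
  move=> m hm; have := Hbeta m hm; case/andP: hm => hm1 hmk.
  case: m hm1 hmk => // t _ htk; clear i hi b hb.
  move=> /(congr1 (fun z => z * (QQ q t)%:R)).
  rewrite mulrAC -natrM mulnC -(@QQS q t.+1 isT) mulrC betaN //; last first.
    by move=> l /andP [h1 h2]; apply: qpos; rewrite h1 (leq_trans h2 htk).
  rewrite big_ord_recl mulrDl.
  have -> : jbeta p q (@ord0 t) = 1 by [].
  rewrite mulr1 big_distrl.
  rewrite (eq_bigr (fun j : 'I_t => (n t.+1 j.+1 * (NN p q j.+1 * \prod_(j.+2 <= l < t.+1) q l))%N%:R)); last first.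
    move=> j _; change ((n t.+1 j.+1)%:R * jbeta p q j.+1 * (QQ q t)%:R = 
      (n t.+1 j.+1 * (NN p q j.+1 * \prod_(j.+2 <= l < t.+1) q l))%N%:R).
    by rewrite -mulrA (betaT j.+1 t) ?natrM // (ltnW htk).
  rewrite -natrM -natr_sum -natrD => /eqP; rewrite eqr_nat => /eqP E.
  have hs : (d %| \sum_(j < t) (n t.+1 j.+1 * (NN p q j.+1 * \prod_(j.+2 <= l < t.+1) q l)))%N.
    apply: dvdn_sum => j _; apply: dvdn_mull; apply: dvdn_mulr; apply: dN.
    by rewrite /= (leq_trans (ltn_ord j) (ltnW htk)).
  have : (d %| NN p q t.+1)%N by apply: dN; rewrite htk.
  rewrite E dvdn_addl //.
  by rewrite Gauss_dvdl // dQ // ltnW.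
have goodT : forall m, (1 <= m <= k.+1)%N -> @good K d (jpoly q n lam m).
  elim/ltn_ind=> m IH /andP [hm1 hmk]; case: m IH hm1 hmk => // m IH _ hmk.
  rewrite jpolyS; case: m IH hmk => [|m] IH hmk; first exact: good_vary.
  apply: good_add; first by apply: good_exp; apply: IH; [exact: ltnSn | rewrite /= (ltnW hmk)].
  apply: good_opp; apply: good_mul; first exact: goodC.
  elim/big_ind: _ => //; first exact: good1.
    by move=> x y; apply: good_mul.
  case=> [[|j]] hj _ /=.
    by rewrite /jpoly /=; apply: good_xpow; apply: dn0; rewrite /= -ltnS.
  apply: good_exp; apply: IH.
    exact: ltn_trans hj (ltnSn _).
  exact: leq_trans (ltnW (ltn_trans hj (ltnSn _))) hmk.
apply/negP => nd; move/negP: hb; apply.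
have hi' : (1 <= i <= k.+1)%N by case/andP: hi => h1 h2; rewrite (ltnW h1) h2.
by apply/eqP; exact: (goodT i hi' b a (introN idP nd)).
Qed.
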